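(* Suppose $S\subseteq\mathbb{Z}^r$ is integrally-poised for polynomials of degree $n+1$. If $g$ is an integer-valued polynomial in $r$ variables of degree $n$, then there is an equality of subgroups of $\mathbb{Z}^r$: \[ \langle g(\mathbf{x})\mathbf{x}\mid \mathbf{x}\in\mathbb{Z}^r\rangle=\langle g(\mathbf{x})\mathbf{x}\mid \mathbf{x}\in S\rangle . \]
   Context: An integer-valued (numerical) polynomial is a polynomial $f\in\mathbb{Q}[x_1,\ldots,x_r]$ with $f(\mathbf{x})\in\mathbb{Z}$ for all $\mathbf{x}\in\mathbb{Z}^r$. A subset $S\subseteq\mathbb{Z}^r$ is integrally-poised for polynomials of degree $m$ if there exists a family of numerical polynomials $\{c_{\mathbf{a}}\}_{\mathbf{a}\in S}$ such that $f(\mathbf{x})=\sum_{\mathbf{a}\in S}c_{\mathbf{a}}(\mathbf{x})f(\mathbf{a})$ for all polynomials $f$ of degree $m$ and all $\mathbf{x}\in\mathbb{Z}^r$. *)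

(* Defs.v *)
From HB Require Import structures.
From mathcomp Require Import all_boot all_order all_algebra.
From mathcomp Require Import finmap mpoly.
Set Implicit Arguments. Unset Strict Implicit. Unset Printing Implicit Defensive.
Import Order.TTheory GRing.Theory Num.Theory.
Local Open Scope ring_scope.
Local Open Scope fset_scope.

(* Points of Z^r are row vectors 'rV[int]_r; polynomials in Q[x_1..x_r] are
   {mpoly rat[r]}.  Evaluation of a polynomial at an integer point. *)
Definition evZ (r : nat) (x : 'rV[int]_r) : 'I_r -> rat := fun i => (x ord0 i)%:~R.

Definition numerical (r : nat) (p : {mpoly rat[r]}) : Prop :=
  forall x : 'rV[int]_r, exists z : int, p.@[evZ x] = z%:~R.

(* "of degree m" = total degree at most m  (msize p = total degree + 1, 0 for p = 0). *)
Definition deg_le (r : nat) (p : {mpoly rat[r]}) (m : nat) : Prop := (msize p <= m.+1)%N.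

Definition integrally_poised (r : nat) (S : {fset 'rV[int]_r}) (m : nat) : Prop :=
  exists c : 'rV[int]_r -> {mpoly rat[r]},
    (forall a, a \in S -> numerical (c a)) /\
    (forall f : {mpoly rat[r]}, deg_le f m ->
       forall x : 'rV[int]_r, f.@[evZ x] = \sum_(a <- S) (c a).@[evZ x] * f.@[evZ a]).

Definition zgen (V : zmodType) (A : V -> Prop) (v : V) : Prop :=
  exists s : seq (int * V), (forall p, p \in s -> A p.2) /\ v = \sum_(p <- s) p.2 *~ p.1.

Definition gpts (r : nat) (g : {mpoly rat[r]}) (P : 'rV[int]_r -> Prop) (v : 'rV[int]_r) : Prop :=
  exists x, P x /\ map_mx (fun z : int => z%:~R : rat) v = g.@[evZ x] *: map_mx (fun z : int => z%:~R : rat) x.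

(* Main.v *)
Require Import Defs.
From HB Require Import structures.
From mathcomp Require Import all_boot all_order all_algebra.
From mathcomp Require Import finmap mpoly.
Import Order.TTheory GRing.Theory Num.Theory.
Local Open Scope ring_scope.
Local Open Scope fset_scope.

Lemma zgen_scale (V : zmodType) (A : V -> Prop) v k : zgen A v -> zgen A (v *~ k).
Proof.
case=> s [Hs ->]; exists [seq (q.1 * k, q.2) | q <- s]; split.
  by move=> p /mapP [q qs ->] /=; apply: Hs.
by rewrite big_map mulrz_suml; apply: eq_bigr => q _ /=; rewrite mulrzA.
Qed.

Lemma zgen_add (V : zmodType) (A : V -> Prop) v w : zgen A v -> zgen A w -> zgen A (v + w).
Proof.
case=> s [Hs ->]; case=> t [Ht ->]; exists (s ++ t); split; last by rewrite big_cat.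
by move=> p; rewrite mem_cat => /orP [] ?; [exact: Hs | exact: Ht].
Qed.

Lemma zgen_closed (V : zmodType) (A B : V -> Prop) v :
  (forall w, A w -> zgen B w) -> zgen A v -> zgen B v.
Proof.
move=> HAB [s [Hs ->]]; elim: s Hs => [|p s IH] Hs.
  by rewrite big_nil; exists [::]; rewrite big_nil.
rewrite big_cons; apply: zgen_add.
  by apply: zgen_scale; apply: HAB; apply: Hs; rewrite inE eqxx.
by apply: IH => q qs; apply: Hs; rewrite inE qs orbT.
Qed.

Lemma zgen_base (V : zmodType) (A : V -> Prop) v : A v -> zgen A v.
Proof. by move=> Av; exists [:: (1, v)]; rewrite big_seq1 mulr1z; split => // p; rewrite inE => /eqP ->. Qed.

Theorem proposition3p4 (r n : nat) (S : {fset 'rV[int]_r}) (g : {mpoly rat[r]}) :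
  integrally_poised S n.+1 -> numerical g -> deg_le g n ->
  forall v : 'rV[int]_r,
    zgen (gpts g (fun _ => True)) v <-> zgen (gpts g (fun x => x \in S)) v.
Proof.
move=> [c [Hc Hf]] Hg Hdeg v; split; last first.
  by apply: zgen_closed => w [x [_ Hx]]; apply: zgen_base; exists x.
apply: zgen_closed => w [x [_ Hx]].
pose za a := numq (g.@[evZ a]).
pose ka a := numq ((c a).@[evZ x]).
have Hza a : (za a)%:~R = g.@[evZ a].
  by rewrite /za; have [z ->] := Hg a; rewrite numq_int.
have Hka a : a \in S -> (ka a)%:~R = (c a).@[evZ x].
  by move=> aS; rewrite /ka; have [z ->] := Hc a aS x; rewrite numq_int.
exists [seq (ka a, a *~ za a) | a <- S]; split.
  move=> p /mapP [a aS ->] /=; exists a; split => //.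
  by apply/matrixP => i j; rewrite !mxE -scaler_int !mxE intrM intz Hza mulrC.
apply/matrixP => i j; apply: (@intr_inj rat).
have -> : i = ord0 by apply: ord_inj; case: i => [[]].
have := congr1 (fun M : 'M[rat]_(1,r) => M ord0 j) Hx; rewrite !mxE => ->.
rewrite big_map summxE rmorph_sum /=.
have Hd : deg_le (g * 'X_j) n.+1.
  have [->|gnz] := eqVneq g 0; first by rewrite mul0r /deg_le msize0.
  rewrite /deg_le msizeM //; last by rewrite -msupp_eq0 msuppX.
  by rewrite msizeX mdeg1 addn2 /=; move: Hdeg; rewrite /deg_le.
have := Hf _ Hd x; rewrite mevalM mevalXU /evZ => ->.
rewrite big_seq [RHS]big_seq; apply: eq_bigr => a aS.
rewrite mevalM mevalXU -!scaler_int !mxE !intrM (intz (ka a)) (intz (za a)) Hza (Hka a aS).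
by rewrite /evZ.
Qed.
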